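(* Let $n\geq p\geq 1$ and $k\geq 2$ be integers. Let $u$ be a length-$p$ word over $\Sigma_k$, let $b[1..p]$ be the border indicator of $u$ and let $a[1..p]$ be the unbordered prefix indicator of $u$. Then \[B_k(u,n) = \begin{cases} \sum\limits_{i=1}^{n-p}a[i]k^{n-p-i} + \sum\limits_{i=n-p+1}^{\lfloor n/2\rfloor} a[i]\,b[i-(n-p)], & \text{if } n \leq 2p;\\[2mm] \sum\limits_{i=1}^p a[i] k^{n-p-i} + \sum\limits_{i=p+1}^{\lfloor n/2\rfloor} \bigl(k^{i-p} - B_k(u,i)\bigr)k^{n-2i}, & \text{otherwise.} \end{cases}\]
   Context: $\Sigma_k=\{1,2,\ldots,k\}$. A border of a word $w$ is a word that is both a non-empty proper prefix and a non-empty proper suffix of $w$; $w$ is bordered if it has a border and unbordered otherwise. For a word $u$ and integer $m\ge |u|$, $B_k(u,m)$ denotes the number of length-$m$ bordered words over $\Sigma_k$ having $u$ as a prefix. For a word $u=u_1\cdots u_p$: its unbordered prefix indicator is the array $a[1..p]$ with $a[i]=1$ if $u_1\cdots u_i$ is unbordered and $a[i]=0$ otherwise; its border indicator is the array $b[1..p]$ with $b[i]=1$ if $u$ has a border of length $i$ and $b[i]=0$ otherwise. *)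

(* Defs.v *)
From mathcomp Require Import all_boot all_algebra.
Set Implicit Arguments. Unset Strict Implicit. Unset Printing Implicit Defensive.

(* Alphabet Sigma_k = {1..k} is represented by 'I_k = {0..k-1} (a relabelling). *)

Definition has_border {T : eqType} (w : seq T) (i : nat) : bool :=
  (0 < i < size w) && (take i w == drop (size w - i) w).

Definition bordered {T : eqType} (w : seq T) : bool :=
  [exists i : 'I_(size w), has_border w i].

Definition Bk (k : nat) (u : seq 'I_k) (m : nat) : nat :=
  #|[set w : m.-tuple 'I_k | bordered (val w) && (take (size u) (val w) == u)]|.

(* unbordered prefix indicator a[i] (1-based) *)
Definition ind_a {T : eqType} (u : seq T) (i : nat) : nat :=
  ~~ bordered (take i u).

Definition ind_b {T : eqType} (u : seq T) (i : nat) : nat :=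
  has_border u i.

(* Main.v *)
Require Import Defs.
From mathcomp Require Import all_boot all_algebra zify.
Set Implicit Arguments. Unset Strict Implicit. Unset Printing Implicit Defensive.

Fixpoint all_words (T : finType) (n : nat) : seq (seq T) :=
  if n is n'.+1 then [seq x :: w | x <- enum T, w <- all_words T n'] else [:: [::]].

Definition cnt (T : finType) n (P : seq T -> bool) : nat :=
  \sum_(w <- all_words T n) P w.

Lemma mem_all_words (T : finType) n w : (w \in all_words T n) = (size w == n).
Proof.
elim: n w => [|n IH] [|x w] //=.
- apply/allpairsP; case => -[a b] /= [] _ _ //.
- apply/allpairsP/idP.
  + by case=> -[a b] /= [_]; rewrite IH => /eqP <- [_ ->].
  + by move=> h; exists (x, w); rewrite mem_enum IH.
Qed.

Lemma uniq_all_words (T : finType) n : uniq (all_words T n).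
Proof.
elim: n => [|n IH] //=; apply: allpairs_uniq => //; first exact: enum_uniq.
by move=> [a b] [c d] _ _ /= [-> ->].
Qed.

Lemma size_all_words (T : finType) n : size (all_words T n) = #|T| ^ n.
Proof.
elim: n => [|n IH] //=; by rewrite size_allpairs IH -cardE expnS.
Qed.

Lemma cnt_ext (T : finType) n (P Q : seq T -> bool) :
  (forall w, size w = n -> P w = Q w) -> cnt n P = cnt n Q.
Proof.
move=> h; rewrite /cnt !(big_seq) ; apply: eq_bigr => w.
by rewrite mem_all_words => /eqP /h ->.
Qed.

Lemma cnt_const (T : finType) n (b : bool) : cnt n (fun _ : seq T => b) = b * #|T| ^ n.
Proof.
by rewrite /cnt big_const_seq count_predT size_all_words; case: b; rewrite /= ?iter_addn_0 ?mul1n ?mul0n //; elim: (_ ^ _) => //.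
Qed.

Lemma cnt_cat (T : finType) m n (P : seq T -> bool) :
  cnt (m + n) P = \sum_(x <- all_words T m) cnt n (fun y => P (x ++ y)).
Proof.
elim: m P => [|m IH] P; first by rewrite /= big_seq1.
rewrite addSn /cnt /= !big_allpairs_dep /=; apply: eq_bigr => x _.
by have := IH (fun w => P (x :: w)); rewrite /cnt => ->.
Qed.

Lemma cnt_one (T : finType) n (v : seq T) (Q : seq T -> bool) :
  size v = n -> cnt n (fun y => Q y && (y == v)) = Q v.
Proof.
move=> hv; rewrite /cnt (bigD1_seq v) ?uniq_all_words ?mem_all_words ?hv //=.
rewrite eqxx andbT big1 ?addn0 // => y /negbTE ->; by rewrite andbF.
Qed.

Lemma cnt_prefix (T : finType) p m (v : seq T) (P : seq T -> bool) :
  size v = p -> cnt (p + m) (fun w => P w && (take p w == v)) = cnt m (fun y => P (v ++ y)).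
Proof.
move=> hv; rewrite cnt_cat /cnt exchange_big /=; apply: eq_bigr => y _.
have := cnt_one (fun x => P (x ++ y)) hv; rewrite /cnt => <-.
rewrite !big_seq; apply: eq_bigr => x; rewrite mem_all_words => /eqP hx.
by rewrite take_size_cat.
Qed.

Lemma cnt_suffix (T : finType) r q (v : seq T) (P : seq T -> bool) :
  size v = q -> cnt (r + q) (fun w => P w && (drop r w == v)) = cnt r (fun x => P (x ++ v)).
Proof.
move=> hv; rewrite cnt_cat /cnt; rewrite !big_seq; apply: eq_bigr => x.
rewrite mem_all_words => /eqP hx.
have := cnt_one (fun y => P (x ++ y)) hv; rewrite /cnt => <-.
rewrite !big_seq; apply: eq_bigr => y _; by rewrite drop_size_cat.
Qed.

Lemma cnt_card (T : finType) n (P : seq T -> bool) :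
  cnt n P = #|[set w : n.-tuple T | P (val w)]|.
Proof.
rewrite cardsE -sum1_card big_mkcond /=.
have -> : \sum_(i : n.-tuple T) (if P (val i) then 1 else 0) =
          \sum_(s <- map val (enum {: n.-tuple T})) P s.
  by rewrite big_map big_enum /=; apply: eq_bigr => i _; case: (P _).
rewrite /cnt; apply: perm_big; apply: uniq_perm.
- exact: uniq_all_words.
- by rewrite map_inj_uniq ?enum_uniq //; apply: val_inj.
move=> s; rewrite mem_all_words; apply/eqP/mapP.
- move=> hs; exists (Tuple (introT eqP hs)) => //; by rewrite mem_enum.
- by case=> t _ ->; rewrite size_tuple.
Qed.

Lemma hb_bordered (T : eqType) (w : seq T) i : has_border w i -> bordered w.
Proof.
move=> h; have /andP [/andP [_ hi] _] := h.
by apply/existsP; exists (Ordinal hi).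
Qed.

Lemma hb_take (T : eqType) (w : seq T) i j :
  has_border w i -> has_border (take i w) j -> has_border w j.
Proof.
rewrite /has_border => /andP [/andP [hi0 hin] /eqP e] /andP [/andP [hj0]].
rewrite size_takel ?(ltnW hin) // => hji /eqP e2.
rewrite hj0 (ltn_trans hji hin) /=; apply/eqP.
rewrite -(take_takel _ (ltnW hji)) e2 e drop_drop; congr drop; lia.
Qed.

Lemma hb_uniq (T : eqType) (w : seq T) i j :
  has_border w i -> has_border w j -> i < j -> has_border (take j w) i.
Proof.
rewrite /has_border => /andP [/andP [hi0 hin] /eqP e] /andP [/andP [hj0 hjn] /eqP e2] hij.
rewrite size_takel ?(ltnW hjn) // hi0 hij /=; apply/eqP.
rewrite take_takel ?(ltnW hij) // e e2 drop_drop; congr drop; lia.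
Qed.

Lemma unb_half (T : eqType) (w : seq T) i :
  has_border w i -> ~~ bordered (take i w) -> 2 * i <= size w.
Proof.
move=> h; apply: contraR; rewrite -ltnNge => hlt.
have /andP [/andP [hi0 hin] /eqP e] := h.
apply: (@hb_bordered _ _ (2 * i - size w)).
rewrite /has_border size_takel ?(ltnW hin) //.
apply/andP; split; first (apply/andP; split; lia).
apply/eqP; rewrite {1}e take_drop.
have -> : 2 * i - size w + (size w - i) = i by lia.
congr drop; lia.
Qed.

Lemma min_border (T : eqType) (w : seq T) :
  bordered w -> exists i, has_border w i && ~~ bordered (take i w).
Proof.
move=> /existsP [i0 h0].
have ex : exists i, has_border w i by exists i0.
case: (ex_minnP ex) => i hi hmin; exists i; rewrite hi /=.
apply/negP => /existsP [j hj].
have := hmin _ (hb_take hi hj).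
move=> hle; have hjs : (j : nat) < size (take i w) := ltn_ord j.
have hs : size (take i w) <= i by rewrite size_take; case: ifP => // /negbT; rewrite -leqNgt.
lia.
Qed.

Definition G (T : eqType) p (u : seq T) i (w : seq T) : bool :=
  has_border w i && ~~ bordered (take i w) && (take p w == u).

Lemma decomp (T : eqType) n p (u : seq T) (w : seq T) : size w = n ->
  (bordered w && (take p w == u) : nat) = \sum_(1 <= i < (n./2).+1) G p u i w.
Proof.
move=> hw; rewrite /G; case: (take p w == u); last first.
  by rewrite andbF big1 // => i _; rewrite andbF.
rewrite andbT; case hb: (bordered w); last first.
  rewrite big1 // => i _; case hh: (has_border w i) => //.
  by rewrite (hb_bordered hh) in hb.
have [i0 /andP [hi0 hu0]] := min_border hb.
have h2 := unb_half hi0 hu0.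
have /andP [/andP [h00 _] _] := hi0.
rewrite (bigD1_seq i0) /=; last 2 first.
- rewrite mem_index_iota; apply/andP; split => //; rewrite ltnS geq_half_double -hw -mul2n; exact: h2.
- by rewrite /index_iota iota_uniq.
rewrite hi0 hu0 big1 // => i hne; rewrite andbT; apply/eqP; rewrite eqb0; apply/negP => /andP [hi hu].
case: (ltngtP i i0) => hc.
- by move: hu0; rewrite (hb_bordered (hb_uniq hi hi0 hc)).
- by move: hu; rewrite (hb_bordered (hb_uniq hi0 hi hc)).
- by rewrite hc eqxx in hne.
Qed.

Lemma caseA (T : finType) n p (u : seq T) i :
  0 < i -> i <= p -> i <= n - p -> size u = p -> p <= n ->
  cnt n (G p u i) = ind_a u i * #|T| ^ (n - p - i).
Proof.
move=> hi0 hip hinp hu hpn.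
have hn : n = p + (n - p) by lia.
rewrite {1}hn /G cnt_prefix //.
have hm : n - p = (n - p - i) + i by lia.
rewrite {1}hm.
rewrite (@cnt_ext _ _ _ (fun y => ~~ bordered (take i u) && (drop (n - p - i) y == take i u))); last first.
  move=> y hy; rewrite /has_border size_cat hu hy takel_cat ?hu //.
  rewrite drop_cat hu ifF; last by apply/negbTE; rewrite -leqNgt; lia.
  have -> : p + (n - p - i + i) - i - p = n - p - i by lia.
  have -> : (0 < i < p + (n - p - i + i)) = true by apply/andP; split; lia.
  by rewrite /= eq_sym andbC.
rewrite cnt_suffix ?size_takel ?hu // cnt_const.
by [].
Qed.

Lemma caseB (T : finType) n p (u : seq T) i :
  n - p < i -> i <= p -> 2 * i <= n -> size u = p -> p <= n ->
  cnt n (G p u i) = ind_a u i * ind_b u (i - (n - p)).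
Proof.
move=> hi0 hip hin hu hpn.
have hn : n = p + (n - p) by lia.
rewrite {1}hn /G cnt_prefix //.
set m := n - p.
set v := drop (i - m) (take i u).
have hv : size v = m by rewrite /v size_drop size_takel ?hu //; lia.
rewrite -{1}hv.
rewrite (@cnt_ext _ _ _ (fun y => (has_border u (i - m) && ~~ bordered (take i u)) && (y == v))); last first.
  move=> y hy; rewrite /has_border size_cat hu hy takel_cat ?hu //.
  rewrite drop_cat hu ifT; last by rewrite /m; lia.
  rewrite -{1}(cat_take_drop (i - m) (take i u)) take_takel; last by rewrite /m; lia.
  have e1 : size (take i u) = i by rewrite size_takel ?hu.
  have e2 : size (take (i - m) u) = i - m by rewrite size_takel // hu /m; lia.
  rewrite eqseq_cat; last by rewrite e2 size_drop hu /m; lia.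
  rewrite hv.
  have -> : (0 < i < p + m) = true by apply/andP; split; rewrite /m; lia.
  have -> : (0 < i - m < p) = true by apply/andP; split; rewrite /m; lia.
  have -> : p - (i - m) = p + m - i by rewrite /m; lia.
  by rewrite /= -/v (eq_sym v y); case: (_ == _); case: (y == v); case: (bordered _).
rewrite cnt_one // /ind_a /ind_b.
by case: (has_border _ _); case: (bordered _).
Qed.

Lemma caseC (T : finType) n p (u : seq T) i :
  p < i -> 2 * i <= n -> size u = p ->
  cnt n (G p u i) = cnt i (fun x => ~~ bordered x && (take p x == u)) * #|T| ^ (n - 2 * i).
Proof.
move=> hpi hin hu.
have hn : n = i + (n - i) by lia.
rewrite {1}hn cnt_cat /cnt big_distrl /=; rewrite !big_seq; apply: eq_bigr => x.
rewrite mem_all_words => /eqP hx.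
have hr : n - i = n - 2 * i + i by lia.
rewrite {1}hr.
have := (@cnt_ext _ (n - 2 * i + i) (fun y => G p u i (x ++ y))
   (fun y => (~~ bordered x && (take p x == u)) && (drop (n - 2 * i) y == x))).
rewrite /cnt => ->; last first.
  move=> y hy; rewrite /G /has_border size_cat hx hy take_size_cat //.
  rewrite drop_cat hx ifF; last by apply/negbTE; rewrite -leqNgt; lia.
  rewrite takel_cat ?hx; last by lia.
  have -> : i + (n - 2 * i + i) - i - i = n - 2 * i by lia.
  have -> : (0 < i < i + (n - 2 * i + i)) = true by apply/andP; split; lia.
  by rewrite /= eq_sym; case: (_ == _); case: (_ == _); case: (bordered _).
have := @cnt_suffix _ (n - 2 * i) _ _ (fun _ => ~~ bordered x && (take p x == u)) hx.
rewrite /cnt => ->.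
have := cnt_const T (n - 2 * i) (~~ bordered x && (take p x == u)).
by rewrite /cnt => ->.
Qed.

Lemma caseC2 (k : nat) p (u : seq 'I_k) i :
  p <= i -> size u = p ->
  cnt i (fun x => ~~ bordered x && (take p x == u)) + Bk u i = k ^ (i - p).
Proof.
move=> hpi hu.
have := @cnt_card _ i (fun w => bordered w && (take (size u) w == u)); rewrite /Bk => <-; rewrite hu /cnt -big_split /=.
have hi : i = p + (i - p) by lia.
have := @cnt_prefix _ p (i - p) _ (fun _ => true) hu.
rewrite -hi /= cnt_const card_ord mul1n /cnt => <-.
by apply: eq_bigr => w _; case: (bordered w); case: (_ == _).
Qed.

Lemma Bk_sum k n p (u : seq 'I_k) : size u = p ->
  Bk u n = \sum_(1 <= i < n./2.+1) cnt n (G p u i).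
Proof.
move=> hu.
have := @cnt_card _ n (fun w => bordered w && (take (size u) w == u)); rewrite /Bk => <-.
rewrite /cnt exchange_big /=; apply: eq_big_seq => w.
rewrite mem_all_words hu => /eqP hw; exact: decomp.
Qed.

Import GRing.Theory.
Local Open Scope ring_scope.

Theorem theorem5 (k n p : nat) (u : seq 'I_k) :
  (2 <= k)%N -> (1 <= p)%N -> (p <= n)%N -> size u = p ->
  (Bk u n)%:Z =
  if (n <= 2 * p)%N then
    \sum_(1 <= i < (n - p).+1) ((ind_a u i) * k ^ (n - p - i))%:Z
    + \sum_(n - p + 1 <= i < (n./2).+1) ((ind_a u i) * (ind_b u (i - (n - p))))%:Z
  else
    \sum_(1 <= i < p.+1) ((ind_a u i) * k ^ (n - p - i))%:Z
    + \sum_(p + 1 <= i < (n./2).+1)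
        ((k ^ (i - p))%:Z - (Bk u i)%:Z) * (k ^ (n - 2 * i))%:Z.
Proof.
move=> hk hp hpn hu.
rewrite (Bk_sum n hu) (big_morph Posz PoszD (erefl _)).
case: ifP => hn.
- rewrite (@big_cat_nat _ _ _ (n - p).+1) /=; last 2 first.
  + by [].
  + rewrite ltnS geq_half_double -mul2n; lia.
  congr (_ + _).
  + apply: eq_big_nat => i /andP [h1 h2]; rewrite caseA ?card_ord //; try lia.
  + rewrite addn1; apply: eq_big_nat => i /andP [h1 h2].
    have : (i <= n./2)%N by lia.
    rewrite geq_half_double -mul2n => h3.
    rewrite caseB //; lia.
- rewrite (@big_cat_nat _ _ _ p.+1) /=; last 2 first.
  + by [].
  + rewrite ltnS geq_half_double -mul2n; lia.
  congr (_ + _).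
  + apply: eq_big_nat => i /andP [h1 h2]; rewrite caseA ?card_ord //; lia.
  + rewrite addn1; apply: eq_big_nat => i /andP [h1 h2].
    have : (i <= n./2)%N by lia.
    rewrite geq_half_double -mul2n => h3.
    rewrite caseC ?card_ord //; try lia.
    rewrite -(@caseC2 k p u i) .
    by rewrite PoszM PoszD addrK.
    all: lia.
Qed.
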